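(* Let $R$ be an associative ring with identity, let $a,b,c,y\in R$ and suppose $t=cab$ is regular. Then the following are equivalent: (i) $y$ is the $(b,c)$-inverse of $a$; (ii) $y$ is a hybrid $(b,c)$-inverse of $a$; (iii) $y$ is an annihilator $(b,c)$-inverse of $a$.
   Context: For $a,b,c\in R$, $y$ is the $(b,c)$-inverse of $a$ if $y\in (bRy)\cap(yRc)$, $yab=b$ and $cay=c$ (such $y$ is unique). $y$ is a hybrid $(b,c)$-inverse of $a$ if $yay=y$, $yR=bR$ and $r(y)=r(c)$. $y$ is an annihilator $(b,c)$-inverse of $a$ if $yay=y$, $l(y)=l(b)$ and $r(y)=r(c)$. Here $l(x)=\{z\in R:zx=0\}$, $r(x)=\{z\in R:xz=0\}$, $xR=\{xz:z\in R\}$. An element is regular if $x=xzx$ for some $z\in R$. *)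

(* Defs.v *)
From HB Require Import structures.
From mathcomp Require Import all_boot all_order all_algebra.
Set Implicit Arguments. Unset Strict Implicit. Unset Printing Implicit Defensive.
Import GRing.Theory.
Local Open Scope ring_scope.

(* R is an arbitrary associative ring with identity (pzRingType allows 0 = 1). *)

Definition in_rideal (R : pzRingType) (x z : R) : Prop := exists u : R, z = x * u.
Definition in_lann (R : pzRingType) (x z : R) : Prop := z * x = 0.
Definition in_rann (R : pzRingType) (x z : R) : Prop := x * z = 0.

Definition regular (R : pzRingType) (x : R) : Prop := exists z : R, x = x * z * x.

Definition bc_inverse (R : pzRingType) (a b c y : R) : Prop :=
  (exists u : R, y = b * u * y) /\ (exists v : R, y = y * v * c) /\
  y * a * b = b /\ c * a * y = c.

Definition hybrid_bc_inverse (R : pzRingType) (a b c y : R) : Prop :=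
  y * a * y = y /\
  (forall z : R, in_rideal y z <-> in_rideal b z) /\
  (forall z : R, in_rann y z <-> in_rann c z).

Definition annihilator_bc_inverse (R : pzRingType) (a b c y : R) : Prop :=
  y * a * y = y /\
  (forall z : R, in_lann y z <-> in_lann b z) /\
  (forall z : R, in_rann y z <-> in_rann c z).

(* Main.v *)
Require Import Defs.
From HB Require Import structures.
From mathcomp Require Import all_boot all_order all_algebra.
Local Open Scope ring_scope.
Import GRing.Theory.

Theorem theorem3p10 (R : pzRingType) (a b c y : R)
  (ht : regular (c * a * b)) :
  (bc_inverse a b c y <-> hybrid_bc_inverse a b c y) /\
  (hybrid_bc_inverse a b c y <-> annihilator_bc_inverse a b c y).
Proof.
have i_ii : bc_inverse a b c y -> hybrid_bc_inverse a b c y.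
  move=> [[u Hu] [[v Hv] [Hyab Hcay]]].
  have Hyay : y * a * y = y by rewrite {2}Hu !mulrA Hyab -Hu.
  split=> //; split=> z; split.
  - move=> [w ->]; exists (u * y * w); rewrite {1}Hu !mulrA //.
  - move=> [w ->]; exists (a * b * w); rewrite !mulrA Hyab //.
  - rewrite /in_rann => H; by rewrite -Hcay -mulrA H mulr0.
  - rewrite /in_rann => H; by rewrite Hv -mulrA H mulr0.
have ii_iii : hybrid_bc_inverse a b c y -> annihilator_bc_inverse a b c y.
  move=> [Hyay [Hid Hr]]; split=> //; split=> // z.
  have [u Hu] : in_rideal b y by apply/Hid; exists 1; rewrite mulr1.
  have [w Hw] : in_rideal y b by apply/Hid; exists 1; rewrite mulr1.
  rewrite /in_lann; split=> H.
  - by rewrite Hw mulrA H mul0r.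
  - by rewrite Hu mulrA H mul0r.
have iii_i : annihilator_bc_inverse a b c y -> bc_inverse a b c y.
  move=> [Hyay [Hl Hr]]; case: ht => s hs.
  have Hyab : y * a * b = b.
    have : in_lann b (y * a - 1).
      by apply/Hl; rewrite /in_lann mulrBl mul1r Hyay subrr.
    by rewrite /in_lann mulrBl mul1r => /eqP; rewrite subr_eq0 => /eqP.
  have Hcay : c * a * y = c.
    have : in_rann c (a * y - 1).
      by apply/Hr; rewrite /in_rann mulrBr mulr1 mulrA Hyay subrr.
    by rewrite /in_rann mulrBr mulr1 mulrA => /eqP; rewrite subr_eq0 => /eqP.
  have hs' : c*a*b*s*c*a*b = c*a*b by rewrite !mulrA in hs; rewrite -hs.
  have H3 : b*s*c*a*b = b.
    have : in_rann y (a*b*s*(c*a*b) - a*b).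
      by apply/Hr; rewrite /in_rann mulrBr !mulrA hs' subrr.
    rewrite /in_rann mulrBr !mulrA Hyab => /eqP; rewrite subr_eq0 => /eqP.
    by rewrite ?mulrA.
  have H4 : b*s*c*a*y = y.
    have : in_lann y (b*s*c*a - 1).
      by apply/Hl; rewrite /in_lann mulrBl mul1r H3 subrr.
    by rewrite /in_lann mulrBl mul1r => /eqP; rewrite subr_eq0 => /eqP.
  have H5 : b*s*c = y by have := H4; rewrite -[b*s*c*a*y]mulrA -[b*s*c*(a*y)]mulrA [c*(a*y)]mulrA Hcay.
  split; first by exists (s*c*a); rewrite !mulrA H4.
  split; first by exists (a*b*s); rewrite !mulrA Hyab H5.
  by [].
split; split; [exact: i_ii | move=> H; apply: iii_i; exact: ii_iii H | exact: ii_iii | move=> H; apply: i_ii; exact: iii_i H].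
Qed.
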